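(* Fix a $C^0$-concept over $\mathbb{K}$ and let $k\in\mathbb{N}_0\cup\{\infty\}$. Let $E,F,H\in\mathcal{M}$, $U\subseteq E$ and $V\subseteq F$ open, and let $f\colon U\to F$ with $f(U)\subseteq V$ and $g\colon V\to H$ be of class $C^k$. Then $g\circ f\colon U\to H$ is of class $C^k$.
   Context: Let $\mathbb{K}$ be a commutative ring with unit carrying a topology. A $C^0$-concept over $\mathbb{K}$ consists of: (a) a class $\mathcal{M}$ of topologized $\mathbb{K}$-modules with $\mathbb{K}\in\mathcal{M}$; (b) for $E,F\in\mathcal{M}$ and open $U\subseteq E$, a set $C^0(U,F)$ of continuous maps; (c) for $E_1,E_2\in\mathcal{M}$ a topology on $E_1\times E_2$ (not necessarily the product topology) making it a member of $\mathcal{M}$; subject to: (I.1) composites of $C^0$-maps are $C^0$, identities and inclusions of open subsets are $C^0$; (I.2) $x\mapsto rx+b$ is $C^0$; (I.3) $t\mapsto tv+x$ is $C^0$; (I.4) $\mathbb{K}^\times$ is open and inversion is $C^0$; (I.5) $C^0$ is local on open covers; (II.1) projections and $v\mapsto(v,y)$, $w\mapsto(x,w)$ are $C^0$; (II.2) $f_1\times f_2$ is $C^0$ for $C^0$-maps $f_i$; (II.3) diagonals are $C^0$; (II.4) exchange/associativity maps of products are $C^0$ both ways; (II.5) addition and scalar multiplication are $C^0$; (III) a $C^0$-map on open $U\subseteq\mathbb{K}$ is determined by its values on $U\cap\mathbb{K}^\times$. For open $V\subseteq X$, $V^{[1]}=\{(x,v,t)\in V\times X\times\mathbb{K}:x+tv\in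 V\}$; a $C^0$-map $g$ is $C^1$ if there is a $C^0$-map $g^{[1]}\colon V^{[1]}\to Y$ with $g(x+tv)-g(x)=t\,g^{[1]}(x,v,t)$; recursively $V^{[k+1]}=(V^{[k]})^{[1]}$, $g$ is $C^{k+1}$ if $C^k$ and $g^{[k]}$ is $C^1$, $g^{[k+1]}=(g^{[k]})^{[1]}$; $C^\infty$ means $C^k$ for all $k\in\mathbb{N}_0$. *)

(* Defs.v *)
From HB Require Import structures.
From mathcomp Require Import all_boot all_algebra.
From mathcomp Require Import boolp classical_sets.

Set Implicit Arguments.
Unset Strict Implicit.
Unset Printing Implicit Defensive.

Import GRing.Theory.
Local Open Scope ring_scope.
Local Open Scope classical_set_scope.

Definition is_topology (T : Type) (O : set (set T)) : Prop :=
  [/\ O setT,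
      (forall (I : Type) (A : I -> set T),
          (forall i, O (A i)) -> O (\bigcup_(i in setT) A i))
    & (forall A B, O A -> O B -> O (A `&` B))].

Record topRing := TopRing {
  Kring :> comUnitRingType;
  Kopen : set (set Kring);
  Kopen_top : is_topology Kopen }.

(** A topologized K-module (no compatibility of topology and module
    operations is required). *)
Record tmod (K : topRing) := TMod {
  tcar :> lmodType K;
  topen : set (set tcar);
  topen_top : is_topology topen }.
Arguments topen {K} t _.
Arguments Kopen : clear implicits.

Definition Kt (K : topRing) : tmod K := @TMod K (GRing.regular K) (@Kopen K) (@Kopen_top K).

(** The data of a C^0-concept: (a) the class M, (b) the sets C^0(U,F),
    represented as predicates on total maps E -> F (only the values on U
    matter, see axiom [C0_ext]), (c) the topology on products. *)
Record C0data (K : topRing) := C0Data {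
  inM : tmod K -> Prop;
  C0 : forall E F : tmod K, set E -> (E -> F) -> Prop;
  prod_top : forall E1 E2 : tmod K,
      {O : set (set (tcar E1 * tcar E2)%type) | is_topology O} }.

Definition prodT (K : topRing) (D : C0data K) (E1 E2 : tmod K) : tmod K :=
  @TMod K (tcar E1 * tcar E2)%type (sval (prod_top D E1 E2))
        (svalP (prod_top D E1 E2)).

Record C0concept (K : topRing) (D : C0data K) : Prop := {
  M_prod : forall E1 E2, inM D E1 -> inM D E2 -> inM D (prodT D E1 E2);
  M_K : inM D (Kt K);
  C0_cont : forall (E F : tmod K) (U : set E) (f : E -> F),
      inM D E -> inM D F -> topen E U -> C0 D U f ->
      forall O, topen F O -> topen E (U `&` f @^-1` O);
  (* representation convention: a map on U is determined by its values on U *)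
  C0_ext : forall (E F : tmod K) (U : set E) (f g : E -> F),
      (forall x, U x -> f x = g x) -> C0 D U f -> C0 D U g;
  C0_comp : forall (E F H : tmod K) (U : set E) (V : set F)
      (f : E -> F) (g : F -> H),
      inM D E -> inM D F -> inM D H -> topen E U -> topen F V ->
      C0 D U f -> (forall x, U x -> V (f x)) -> C0 D V g -> C0 D U (g \o f);
  C0_id : forall (E : tmod K) (U : set E),
      inM D E -> topen E U -> C0 D U (@id E);
  C0_affine : forall (E : tmod K) (r : K) (b : E),
      inM D E -> C0 D setT (fun x : E => r *: x + b);
  C0_line : forall (E : tmod K) (v x : E),
      inM D E -> C0 (E := Kt K) (F := E) D setT (fun t : (GRing.regular K) => (t : K) *: v + x);
  units_open : topen (Kt K) [set t : (GRing.regular K) | (t : K) \is a GRing.unit];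
  C0_inv : C0 (E := Kt K) (F := Kt K) D [set t : (GRing.regular K) | (t : K) \is a GRing.unit]
      (fun t : (GRing.regular K) => ((t : K)^-1 : (GRing.regular K)));
  C0_local : forall (E F : tmod K) (U : set E) (f : E -> F)
      (I : Type) (W : I -> set E),
      inM D E -> inM D F -> topen E U -> (forall i, topen E (W i)) ->
      \bigcup_(i in setT) W i = U -> (forall i, C0 D (W i) f) -> C0 D U f;
  C0_fst : forall E1 E2 : tmod K, inM D E1 -> inM D E2 ->
      C0 (E := prodT D E1 E2) (F := E1) D setT fst;
  C0_snd : forall E1 E2 : tmod K, inM D E1 -> inM D E2 ->
      C0 (E := prodT D E1 E2) (F := E2) D setT snd;
  C0_pairl : forall (E1 E2 : tmod K) (y : E2), inM D E1 -> inM D E2 ->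
      C0 (E := E1) (F := prodT D E1 E2) D setT (fun v : E1 => (v, y));
  C0_pairr : forall (E1 E2 : tmod K) (x : E1), inM D E1 -> inM D E2 ->
      C0 (E := E2) (F := prodT D E1 E2) D setT (fun w : E2 => (x, w));
  C0_prodmap : forall (E1 E2 F1 F2 : tmod K) (U1 : set E1) (U2 : set E2)
      (f1 : E1 -> F1) (f2 : E2 -> F2),
      inM D E1 -> inM D E2 -> inM D F1 -> inM D F2 ->
      topen E1 U1 -> topen E2 U2 -> C0 D U1 f1 -> C0 D U2 f2 ->
      C0 (E := prodT D E1 E2) (F := prodT D F1 F2) D
         [set p | U1 p.1 /\ U2 p.2] (fun p => (f1 p.1, f2 p.2));
  C0_diag : forall E : tmod K, inM D E ->
      C0 (E := E) (F := prodT D E E) D setT (fun x : E => (x, x));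
  C0_swap : forall E1 E2 : tmod K, inM D E1 -> inM D E2 ->
      C0 (E := prodT D E1 E2) (F := prodT D E2 E1) D setT
         (fun p => (p.2, p.1));
  C0_assoc : forall E1 E2 E3 : tmod K, inM D E1 -> inM D E2 -> inM D E3 ->
      C0 (E := prodT D (prodT D E1 E2) E3) (F := prodT D E1 (prodT D E2 E3)) D
         setT (fun p => (p.1.1, (p.1.2, p.2)));
  C0_assocV : forall E1 E2 E3 : tmod K, inM D E1 -> inM D E2 -> inM D E3 ->
      C0 (E := prodT D E1 (prodT D E2 E3)) (F := prodT D (prodT D E1 E2) E3) D
         setT (fun p => ((p.1, p.2.1), p.2.2));
  C0_add : forall E : tmod K, inM D E ->
      C0 (E := prodT D E E) (F := E) D setT (fun p => p.1 + p.2);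
  C0_scale : forall E : tmod K, inM D E ->
      C0 (E := prodT D (Kt K) E) (F := E) D setT
         (fun p => (p.1 : K) *: (p.2 : E));
  C0_units_dense : forall (F : tmod K) (U : set (Kt K)) (f g : Kt K -> F),
      inM D F -> topen (Kt K) U -> C0 D U f -> C0 D U g ->
      (forall t, U t -> (t : K) \is a GRing.unit -> f t = g t) ->
      forall t, U t -> f t = g t }.

Section Differentiability.
Variables (K : topRing) (D : C0data K).

Definition ext1 (X : tmod K) : tmod K := prodT D (prodT D X X) (Kt K).

Definition V1 (X : tmod K) (V : set X) : set (ext1 X) :=
  [set p | V p.1.1 /\ V (p.1.1 + (p.2 : K) *: p.1.2)].

Fixpoint extk (X : tmod K) (n : nat) : tmod K :=
  match n with 0 => X | n'.+1 => ext1 (extk X n') end.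

Fixpoint Vk (X : tmod K) (V : set X) (n : nat) : set (extk X n) :=
  match n as m return set (extk X m) with
  | 0 => V
  | n'.+1 => V1 (@Vk X V n')
  end.
Arguments Vk {X} V n.

Definition is_deriv1 (X Y : tmod K) (V : set X) (g : X -> Y)
    (g1 : ext1 X -> Y) : Prop :=
  C0 D (V1 V) g1 /\
  forall p : ext1 X, V1 V p ->
    g (p.1.1 + (p.2 : K) *: p.1.2) - g p.1.1 = (p.2 : K) *: g1 p.

Definition isC1 (X Y : tmod K) (V : set X) (g : X -> Y) : Prop :=
  C0 D V g /\ exists g1, is_deriv1 V g g1.

Definition isCn (X Y : tmod K) (n : nat) (V : set X) (g : X -> Y) : Prop :=
  C0 D V g /\
  exists G : forall j : nat, extk X j -> Y,
    (forall x, V x -> G 0%N x = g x) /\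
    (forall j : nat, (j < n)%N -> is_deriv1 (Vk V j) (G j) (G j.+1)).

Inductive smoothness := Fin of nat | Infty.

Definition isCk (X Y : tmod K) (k : smoothness) (V : set X) (g : X -> Y)
    : Prop :=
  match k with
  | Fin n => isCn n V g
  | Infty => forall n : nat, isCn n V g
  end.

End Differentiability.
Arguments Fin n : clear implicits.
Arguments Infty : clear implicits.

(* Main.v *)
Require Import Defs.
From mathcomp Require Import all_boot all_algebra.
From mathcomp Require Import boolp classical_sets.
From mathcomp Require Import zify.
Set Implicit Arguments.
Unset Strict Implicit.
Unset Printing Implicit Defensive.
Import GRing.Theory.
Local Open Scope ring_scope.
Local Open Scope classical_set_scope.
Set Warnings "-notation-overridden -ambiguous-paths".
Section S.
Variables (K : topRing) (D : C0data K) (HD : C0concept D).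

Lemma topT (X : tmod K) : topen X setT.
Proof. by case: (topen_top X). Qed.

Lemma topI (X : tmod K) (A B : set X) : topen X A -> topen X B -> topen X (A `&` B).
Proof. by case: (topen_top X) => _ _; apply. Qed.

Lemma inM1 (X : tmod K) : inM D X -> inM D (ext1 D X).
Proof. move=> hX; apply: (M_prod HD); [exact: (M_prod HD)| exact: (M_K HD)]. Qed.

Lemma C0_restr (X Y : tmod K) (W W' : set X) (g : X -> Y) :
  inM D X -> inM D Y -> topen X W' -> topen X W ->
  (forall x, W' x -> W x) -> C0 D W g -> C0 D W' g.
Proof.
move=> hX hY hW' hW sub hg.
have := @C0_comp K D HD X X Y W' W id g hX hX hY hW' hW (C0_id HD hX hW') sub hg.
by apply: (C0_ext HD).
Qed.

Lemma openpre (X Y : tmod K) (h : X -> Y) (W : set Y) :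
  inM D X -> inM D Y -> C0 D setT h -> topen Y W -> topen X (h @^-1` W).
Proof.
move=> hX hY hh hW.
have := @C0_cont K D HD X Y setT h hX hY (topT X) hh W hW.
by rewrite setTI.
Qed.

Lemma C0pair (X Y1 Y2 : tmod K) (W : set X) (h1 : X -> Y1) (h2 : X -> Y2) :
  inM D X -> inM D Y1 -> inM D Y2 -> topen X W -> C0 D W h1 -> C0 D W h2 ->
  C0 (F := prodT D Y1 Y2) D W (fun x => (h1 x, h2 x)).
Proof.
move=> hX hY1 hY2 hW c1 c2.
pose P : set (prodT D X X) := [set p | W p.1 /\ W p.2].
have hP : topen (prodT D X X) P.
  apply: topI.
  - exact: (openpre (M_prod HD hX hX) hX (C0_fst HD hX hX) hW).
  - exact: (openpre (M_prod HD hX hX) hX (C0_snd HD hX hX) hW).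
have hd : C0 (F := prodT D X X) D W (fun x : X => (x, x)).
  apply: (C0_restr (W := setT)) => //; first exact: (M_prod HD).
  - exact: topT.
  - exact: (C0_diag HD).
have := @C0_comp K D HD X (prodT D X X) (prodT D Y1 Y2) W P _ _ hX
  (M_prod HD hX hX) (M_prod HD hY1 hY2) hW hP hd (fun x Wx => conj Wx Wx)
  (C0_prodmap HD hX hX hY1 hY2 hW hW c1 c2).
by apply: (C0_ext HD).
Qed.

Lemma C0compT (X Y Z : tmod K) (h1 : X -> Y) (h2 : Y -> Z) :
  inM D X -> inM D Y -> inM D Z -> C0 D setT h1 -> C0 D setT h2 ->
  C0 D setT (h2 \o h1).
Proof.
move=> hX hY hZ c1 c2.
exact: (@C0_comp K D HD X Y Z setT setT h1 h2 hX hY hZ (topT _) (topT _) c1 (fun _ _ => I) c2).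
Qed.

Section E1.
Variables (X : tmod K) (hX : inM D X).

Lemma C0p11 : C0 (E := ext1 D X) (F := X) D setT (fun p => p.1.1).
Proof.
have := C0compT (M_prod HD (M_prod HD hX hX) (M_K HD)) (M_prod HD hX hX) hX
  (C0_fst HD (M_prod HD hX hX) (M_K HD)) (C0_fst HD hX hX).
by apply: (C0_ext HD).
Qed.

Lemma C0p12 : C0 (E := ext1 D X) (F := X) D setT (fun p => p.1.2).
Proof.
have := C0compT (M_prod HD (M_prod HD hX hX) (M_K HD)) (M_prod HD hX hX) hX
  (C0_fst HD (M_prod HD hX hX) (M_K HD)) (C0_snd HD hX hX).
by apply: (C0_ext HD).
Qed.

Lemma C0p2 : C0 (E := ext1 D X) (F := Kt K) D setT (fun p => p.2).
Proof. exact: (C0_snd HD (M_prod HD hX hX) (M_K HD)). Qed.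

Lemma C0phi : C0 (E := ext1 D X) (F := X) D setT
   (fun p => p.1.1 + (p.2 : K) *: p.1.2).
Proof.
have h1X := inM1 hX.
have hs : C0 (E := ext1 D X) (F := X) D setT (fun p => (p.2 : K) *: p.1.2).
  have := C0compT h1X (M_prod HD (M_K HD) hX) hX
    (C0pair h1X (M_K HD) hX (topT _) C0p2 C0p12) (C0_scale HD hX).
  by apply: (C0_ext HD).
have := C0compT h1X (M_prod HD hX hX) hX
    (C0pair h1X hX hX (topT _) C0p11 hs) (C0_add HD hX).
by apply: (C0_ext HD).
Qed.

Lemma openV1 (W : set X) : topen X W -> topen (ext1 D X) (V1 W).
Proof.
move=> hW.
exact: (topI (openpre (inM1 hX) hX C0p11 hW) (openpre (inM1 hX) hX C0phi hW)).
Qed.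
End E1.

Fixpoint CnR (n : nat) (X Y : tmod K) (W : set X) (g : X -> Y) {struct n} : Prop :=
  match n with
  | 0 => C0 D W g
  | m.+1 => C0 D W g /\ exists g1 : ext1 D X -> Y, is_deriv1 W g g1 /\ CnR m (V1 W) g1
  end.

Lemma CnR_C0 n (X Y : tmod K) (W : set X) (g : X -> Y) : CnR n W g -> C0 D W g.
Proof. by case: n => [|n] //= []. Qed.

Lemma CnR_down n : forall (X Y : tmod K) (W : set X) (g : X -> Y),
  CnR n.+1 W g -> CnR n W g.
Proof.
elim: n => [|n IH] X Y W g /= [c [g1 [d r]]]; first by [].
by split=> //; exists g1; split=> //; apply: IH.
Qed.

Lemma CnR_ext n (X Y : tmod K) (W : set X) (g g' : X -> Y) :
  (forall x, W x -> g x = g' x) -> CnR n W g -> CnR n W g'.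
Proof.
case: n => [|n] e /=; first by apply: (C0_ext HD).
move=> [c [g1 [[d1 d2] r]]]; split; first by apply: (C0_ext HD e).
exists g1; split=> //; split=> // p [h1 h2].
by rewrite -!e //; apply: d2.
Qed.

Lemma CnR_lin n : forall (X Y : tmod K) (L : X -> Y),
  inM D X -> inM D Y ->
  (forall (a : K) x y, L (a *: x + y) = a *: L x + L y) -> C0 D setT L ->
  forall W, topen X W -> CnR n W L.
Proof.
elim: n => [|n IH] X Y L hX hY lin cL W hW.
  by apply: (C0_restr (W := setT)) => //; apply: topT.
have cW : C0 D W L by apply: (C0_restr (W := setT)) => //; apply: topT.
have cL' : C0 (E := ext1 D X) D setT (fun p => L p.1.2).
  have := C0compT (inM1 hX) hX hY (C0p12 hX) cL.
  by apply: (C0_ext HD).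
split=> //; exists (fun p => L p.1.2); split; last first.
  apply: IH => //; [exact: inM1| |exact: openV1].
  by move=> a p q; rewrite -lin.
split.
  apply: (C0_restr (W := setT)) => //; [exact: inM1|exact: openV1|exact: topT].
move=> p _.
by rewrite (addrC p.1.1) lin addrK.
Qed.

Lemma CnR_pair n : forall (X Y1 Y2 : tmod K) (W : set X) (h1 : X -> Y1) (h2 : X -> Y2),
  inM D X -> inM D Y1 -> inM D Y2 -> topen X W -> CnR n W h1 -> CnR n W h2 ->
  CnR n (Y := prodT D Y1 Y2) W (fun x => (h1 x, h2 x)).
Proof.
elim: n => [|n IH] X Y1 Y2 W h1 h2 hX hY1 hY2 hW.
  exact: C0pair.
move=> [c1 [g1 [[d1 e1] r1]]] [c2 [g2 [[d2 e2] r2]]].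
split; first exact: C0pair.
exists (fun p => (g1 p, g2 p)); split; last first.
  by apply: IH => //; [exact: inM1|exact: openV1].
split; first by apply: C0pair => //; [exact: inM1|exact: openV1].
move=> p Hp.
have := e1 p Hp; have := e2 p Hp.
move=> E2 E1.
rewrite /=.
apply: (f_equal2 pair).
  exact: E1.
exact: E2.
Qed.

Lemma CnR_chain n : forall (X Y Z : tmod K) (U : set X) (V : set Y) (f : X -> Y) (g : Y -> Z),
  inM D X -> inM D Y -> inM D Z -> topen X U -> topen Y V ->
  (forall x, U x -> V (f x)) -> CnR n U f -> CnR n V g -> CnR n U (g \o f).
Proof.
elim: n => [|n IH] X Y Z U V f g hX hY hZ hU hV fUV.
  move=> /= cf cg; exact: (C0_comp HD hX hY hZ hU hV cf fUV cg).
move=> hf hg.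
have hf' := CnR_down hf.
move: hf hg => [cf [f1 [[df ef] rf]]] [cg [g1 [[dg eg] rg]]].
split; first exact: (C0_comp HD hX hY hZ hU hV cf fUV cg).
pose h := fun p : ext1 D X => (((f p.1.1, f1 p), p.2) : ext1 D Y).
have eqf : forall p, V1 U p -> f (p.1.1 + (p.2 : K) *: p.1.2) = f p.1.1 + (p.2 : K) *: f1 p.
  by move=> p Hp; rewrite -ef // [f p.1.1 + _]addrC subrK.
have hmaps : forall p, V1 U p -> V1 V (h p).
  move=> p [H1 H2]; split; rewrite /h /=; first exact: fUV.
  by rewrite -eqf //; apply: fUV.
have h1X := inM1 hX; have h1Y := inM1 hY.
have oU := openV1 hX hU; have oV := openV1 hY hV.
have hh : CnR n (V1 U) h.
  apply: (CnR_pair h1X (M_prod HD hY hY) (M_K HD) oU).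
    apply: (CnR_pair h1X hY hY oU) => //.
    apply: (IH _ _ _ (V1 U) U (fun p : ext1 D X => p.1.1) f) => //.
      by move=> p [].
    apply: CnR_lin => //; last exact: C0p11.
  apply: CnR_lin => //; first exact: (M_K HD).
  exact: C0p2.
have hgh : CnR n (V1 U) (g1 \o h) by apply: (IH _ _ _ _ (V1 V)).
exists (g1 \o h); split=> //.
split; first exact: CnR_C0 hgh.
move=> p Hp /=.
rewrite eqf //.
exact: (eg (h p) (hmaps p Hp)).
Qed.

Lemma chain_to_CnR (X Y : tmod K) (V : set X) (G : forall j, extk D X j -> Y) m :
  forall j, C0 D (Vk (n:=j) V) (G j) ->
  (forall i, (j <= i)%N -> (i < j + m)%N -> is_deriv1 (Vk (n:=i) V) (G i) (G i.+1)) ->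
  CnR m (Vk (n:=j) V) (G j).
Proof.
elim: m => [|m IH] j c d; first by [].
have dj : is_deriv1 (Vk (n:=j) V) (G j) (G j.+1) by apply: d => //; lia.
split=> //; exists (G j.+1); split=> //.
apply: (IH j.+1); first by case: dj.
by move=> i h1 h2; apply: d; lia.
Qed.

Definition stepS (X Y : tmod K) (m : nat) (W : set X) (h : X -> Y) : ext1 D X -> Y :=
  match pselect (exists h1, is_deriv1 W h h1 /\ CnR m (V1 W) h1) with
  | left e => proj1_sig (cid e)
  | right _ => fun _ => 0
  end.

Lemma stepS_spec (X Y : tmod K) (m : nat) (W : set X) (h : X -> Y) :
  CnR m.+1 W h -> is_deriv1 W h (stepS m W h) /\ CnR m (V1 W) (stepS m W h).
Proof.
move=> [_ ex]; rewrite /stepS; case: pselect => [e|ne]; last by [].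
exact: (proj2_sig (cid e)).
Qed.

Fixpoint Gc (X Y : tmod K) (V : set X) (g : X -> Y) (n i : nat) : extk D X i -> Y :=
  match i as i0 return extk D X i0 -> Y with
  | 0 => g
  | i'.+1 => stepS (n - i'.+1) (Vk (n:=i') V) (Gc V g n (i:=i'))
  end.

Lemma Gc_spec (X Y : tmod K) (V : set X) (g : X -> Y) n :
  CnR n V g -> forall i, (i <= n)%N -> CnR (n - i) (Vk (n:=i) V) (Gc V g n (i:=i)).
Proof.
move=> h; elim=> [|i IH] hi; first by rewrite subn0.
have e : (n - i = (n - i.+1).+1)%N by lia.
have := IH (ltnW hi); rewrite e => /stepS_spec [_ r].
exact: r.
Qed.

Lemma CnR_isCn (X Y : tmod K) (V : set X) (g : X -> Y) n :
  CnR n V g <-> isCn D n V g.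
Proof.
split.
  move=> h; split; first exact: CnR_C0 h.
  exists (fun j => Gc V g n (i:=j)); split=> // j hj.
  have := Gc_spec h (ltnW hj).
  have e : (n - j = (n - j.+1).+1)%N by lia.
  by rewrite e => /stepS_spec [d _].
move=> [c [G [e d]]].
have c0 : C0 D V (G 0%N).
  by apply: (C0_ext HD _ c) => x Vx; rewrite e.
have hG : CnR n V (G 0%N).
  by apply: (@chain_to_CnR X Y V G n 0%N c0) => i _ hi; apply: d.
by apply: (CnR_ext _ hG) => x Vx; rewrite e.
Qed.
End S.

Theorem proposition4p5 (K : topRing) (D : C0data K) (HD : C0concept D)
    (k : smoothness) (E F H : tmod K) (U : set E) (V : set F)
    (f : E -> F) (g : F -> H) :
  inM D E -> inM D F -> inM D H ->
  topen E U -> topen F V ->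
  (forall x, U x -> V (f x)) ->
  isCk D k U f -> isCk D k V g -> isCk D k U (g \o f).
Proof.
move=> hE hF hH hU hV fUV.
case: k => [n|] /=.
  move=> /(CnR_isCn HD) hf /(CnR_isCn HD) hg; apply/(CnR_isCn HD).
  exact: (CnR_chain HD hE hF hH hU hV fUV hf hg).
move=> hf hg n.
apply/(CnR_isCn HD).
exact: (CnR_chain HD hE hF hH hU hV fUV (proj2 (CnR_isCn HD _ _ _) (hf n)) (proj2 (CnR_isCn HD _ _ _) (hg n))).
Qed.
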